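(* Let $G=(U,E)$ be a connected graph with $n=|U|$ vertices. Then there exists a category system $\mathcal S\subset 2^U$ such that the greedy category-based routing strategy ROUTING correctly routes messages between all pairs of vertices of $G$ and such that $\operatorname{memdim}(\mathcal S)=O\big((\operatorname{diam}(G)+\log n)^2\big)$.
   Context: A category system for a graph $G=(U,E)$ is a family $\mathcal S\subset 2^U$ of subsets of the vertex set. For $u\in U$ let $\mathrm{cat}(u)=\{C\in\mathcal S: u\in C\}$. The membership dimension is $\operatorname{memdim}(\mathcal S)=\max_{u\in U}|\mathrm{cat}(u)|$. For $s,t\in U$ define $d(s,t)=|\mathrm{cat}(t)\setminus \mathrm{cat}(s)|$. $N(u)$ denotes the set of neighbors of $u$ in $G$, and $\operatorname{diam}(G)$ is the maximum over pairs of vertices of their shortest-path distance in $G$. The strategy ROUTING is: a node $u$ holding a message for destination $w\neq u$ forwards it to a neighbor $v\in N(u)$ with $d(v,w)<d(u,w)$. ROUTING correctly routes messages between all pairs of vertices if for every ordered pair of distinct vertices $u,w$ there is a neighbor $v\in N(u)$ with $d(v,w)<d(u,w)$ (so that, since $d$ takes nonnegative integer values and strictly decreases along the route, every message from any source is delivered to its destination). *)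

(* Defs.v *)
From mathcomp Require Import all_boot.
Set Implicit Arguments. Unset Strict Implicit. Unset Printing Implicit Defensive.

(* A simple graph on a finite vertex type T is a symmetric irreflexive
   relation e : rel T.  A category system is a family S of subsets of T. *)

Section Defs.
Variables (T : finType) (e : rel T).

(* shortest-path distance: least k such that there is a walk of length k
   (a k-tuple of successive vertices) from u to v; searched in 0..#|T|-1,
   which suffices for connected graphs. *)
Definition walk_of_len (u v : T) (k : nat) : bool :=
  [exists p : k.-tuple T, path e u p && (last u p == v)].

Definition gdist (u v : T) : nat := find (walk_of_len u v) (iota 0 #|T|).

Definition gdiam : nat := \max_(u : T) \max_(v : T) gdist u v.

Definition gconnected : Prop := forall u v : T, connect e u v.

Variable S : {set {set T}}.

Definition cat (u : T) : {set {set T}} := [set C in S | u \in C].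

Definition memdim : nat := \max_(u : T) #|cat u|.

Definition cdist (s t : T) : nat := #|cat t :\: cat s|.

Definition routing_correct : Prop :=
  forall u w : T, u != w -> exists v : T, e u v && (cdist v w < cdist u w).

End Defs.

(* Main.v *)
Require Import Defs.
From mathcomp Require Import all_boot.
From mathcomp Require Import zify.
Set Implicit Arguments. Unset Strict Implicit. Unset Printing Implicit Defensive.

Section Routing.
Variables (T : finType) (e : rel T).
Hypothesis econ : gconnected e.
Variable r : T.

Lemma walkP u v k : reflect (exists s : seq T, [/\ size s = k, path e u s & last u s = v])
  (walk_of_len e u v k).
Proof.
apply: (iffP existsP) => [[p /andP[hp /eqP hl]] | [s [hs hp hl]]].
  by exists (val p); rewrite size_tuple.
have hs' : size s == k by apply/eqP.
by exists (Tuple hs'); rewrite /= hp hl eqxx.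
Qed.

Lemma walk0 u v : walk_of_len e u v 0 = (u == v).
Proof.
apply/walkP/eqP => [[s [hs _ hl]] | ->]; last by exists [::].
by move: hs hl; case: s.
Qed.

Lemma walkS u v k : walk_of_len e u v k.+1 -> exists2 z, walk_of_len e u z k & e z v.
Proof.
move/walkP=> [s [hs hp hl]]; move: hs hp hl; case/lastP: s => [//|s z].
rewrite size_rcons rcons_path last_rcons => [[hs]] /andP[hp hz] hl.
exists (last u s); last by rewrite -hl.
by apply/walkP; exists s.
Qed.

Lemma walk_ext u z v k : walk_of_len e u z k -> e z v -> walk_of_len e u v k.+1.
Proof.
move/walkP=> [s [hs hp hl]] hz; apply/walkP; exists (rcons s v).
by rewrite size_rcons rcons_path last_rcons hs hp hl hz.
Qed.

Lemma walk_conn u v : exists2 k, k < #|T| & walk_of_len e u v k.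
Proof.
have /connectP[p hp hl] := econ u v.
rewrite hl; case: (shortenP hp) => p' hp' huniq _.
exists (size p').
  have := card_uniqP huniq => /= h.
  by have := max_card (mem (u :: p')); rewrite h.
by apply/walkP; exists p'; split.
Qed.

Lemma gdist_spec u v : [/\ gdist e u v < #|T|, walk_of_len e u v (gdist e u v)
  & forall k, k < gdist e u v -> ~~ walk_of_len e u v k].
Proof.
have [k hk hw] := walk_conn u v.
have hh : has (walk_of_len e u v) (iota 0 #|T|).
  by apply/hasP; exists k; rewrite ?mem_iota.
have hf := hh; rewrite has_find size_iota in hf.
split => //.
  by have := nth_find 0 hh; rewrite nth_iota.
move=> j hj; have := before_find 0 hj; rewrite nth_iota ?add0n => [->//|].
exact: ltn_trans hj hf.
Qed.

Lemma gdist_min u v k : walk_of_len e u v k -> gdist e u v <= k.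
Proof.
move=> hw; case: (gdist_spec u v) => _ _ h; rewrite leqNgt; apply/negP => hlt.
by move: (h _ hlt); rewrite hw.
Qed.

Definition dep (y : T) := gdist e r y.
Definition par (y : T) : T :=
  if [pick z | walk_of_len e r z (dep y).-1 && e z y] is Some z then z else y.
Definition anc (k : nat) (y : T) := iter (dep y - k) par y.
Definition sub (x : T) : {set T} := [set y | (dep x <= dep y) && (anc (dep x) y == x)].

Lemma dep0 y : (dep y == 0) = (y == r).
Proof.
apply/eqP/eqP => [h | ->].
  case: (gdist_spec r y) => _ hw _; move: hw; rewrite /dep in h; rewrite h walk0.
  by move/eqP.
by apply/eqP; rewrite -leqn0; apply: gdist_min; rewrite walk0.
Qed.

Lemma par_spec y : y != r -> e (par y) y /\ dep (par y) = (dep y).-1.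
Proof.
move=> hy; have hd : 0 < dep y by rewrite lt0n dep0.
case: (gdist_spec r y) => _ hw hmin.
have [z0 h1 h2] : exists2 z, walk_of_len e r z (dep y).-1 & e z y.
  by move: hw hd; rewrite /dep; case: (gdist e r y) => // m /walkS.
rewrite /par; case: pickP => [z /andP[hz hez] | hnone]; last first.
  by have := hnone z0; rewrite h1 h2.
split => //; apply/eqP; rewrite eqn_leq gdist_min //=.
rewrite leqNgt; apply/negP => hlt.
case: (gdist_spec r z) => _ hwz _.
have := walk_ext hwz hez; apply/negP; apply: hmin.
rewrite /dep in hlt hd; move: hlt hd; rewrite /dep; lia.
Qed.

Lemma dep_le_D y : dep y <= gdiam e.
Proof.
rewrite /dep /gdiam; apply: (leq_trans _ (leq_bigmax r)).
exact: (leq_bigmax (F := fun v => gdist e r v) y).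
Qed.

Lemma anc_dep y k : k <= dep y -> dep (anc k y) = k.
Proof.
rewrite /anc; move eq: (dep y - k) => m; elim: m y eq => [|m IH] y eq hk /=.
  by apply/eqP; rewrite eqn_leq hk -subn_eq0 eq.
have hy : y != r by rewrite -dep0; apply/eqP => h; rewrite h in eq.
have [_ hp] := par_spec hy.
rewrite -iterS iterSr; apply: IH; rewrite ?hp; lia.
Qed.

Lemma anc_self y : anc (dep y) y = y.
Proof. by rewrite /anc subnn. Qed.

Lemma anc_par y k : y != r -> k <= (dep y).-1 -> anc k (par y) = anc k y.
Proof.
move=> hy hk; have hd : 0 < dep y by rewrite lt0n dep0.
have [_ hp] := par_spec hy.
rewrite /anc hp.
have -> : dep y - k = ((dep y).-1 - k).+1 by lia.
by rewrite iterSr.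
Qed.

Lemma anc_anc y j k : j <= k -> k <= dep y -> anc j (anc k y) = anc j y.
Proof.
move=> hj hk; rewrite {1}/anc anc_dep // /anc -iterD; congr iter; lia.
Qed.

Lemma anc0 y : anc 0 y = r.
Proof. by apply/eqP; rewrite -dep0 anc_dep. Qed.

Definition bitn (i a : nat) := odd (a %/ 2 ^ i).

Lemma bits_inj L a b : a < 2 ^ L -> b < 2 ^ L ->
  (forall i, i < L -> bitn i a = bitn i b) -> a = b.
Proof.
elim: L a b => [|L IH] a b ha hb h.
  by move: ha hb; rewrite expn0 !ltnS !leqn0 => /eqP-> /eqP->.
have h0 := h 0 isT; rewrite /bitn expn0 !divn1 in h0.
have hq : a %/ 2 = b %/ 2.
  apply: IH; rewrite ?ltn_divLR // -?expnSr //.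
  move=> i hi; rewrite /bitn -!divnMA -expnS; exact: h.
by rewrite (divn_eq a 2) (divn_eq b 2) hq !modn2 h0.
Qed.

Definition L := (trunc_log 2 #|T|).+1.
Definition lab (y : T) : nat := enum_rank y.

Lemma lab_lt y : lab y < 2 ^ L.
Proof. rewrite /lab /L. have h := ltn_ord (enum_rank y). have h2 := trunc_log_ltn #|T| (isT : 1 < 2). exact: ltn_trans h h2. Qed.

Lemma lab_diff x y : x != y -> exists2 i, i < L & bitn i (lab x) != bitn i (lab y).
Proof.
move=> hxy.
have : ~~ [forall i : 'I_L, bitn i (lab x) == bitn i (lab y)].
  apply: contra hxy => /forallP h; apply/eqP; apply: enum_rank_inj; apply: ord_inj.
  by apply: (bits_inj (lab_lt x) (lab_lt y)) => i hi; apply/eqP: (h (Ordinal hi)).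
by move/forallPn => [i hi]; exists i.
Qed.

Definition Cat (k i : nat) (b : bool) : {set T} :=
  [set y | (dep y < k) || (bitn i (lab (anc k y)) != b)].

Definition D := gdiam e.
Definition Cf (p : 'I_D * 'I_L * bool) := Cat (p.1.1).+1 p.1.2 p.2.
Definition Sys : {set {set T}} :=
  (sub @: [set x | x != r]) :|: (Cf @: setT).


Lemma sysP X : X \in Sys -> (exists x, X = sub x) \/ (exists k i b, X = Cat k i b).
Proof.
rewrite inE => /orP[/imsetP[x _ ->] | /imsetP[p _ ->]].
  by left; exists x.
by right; exists (p.1.1).+1, p.1.2, p.2.
Qed.

Lemma mem_cat (S : {set {set T}}) X y : (X \in Defs.cat S y) = (X \in S) && (y \in X).
Proof. by rewrite inE. Qed.

Lemma step u w : symmetric e -> u != w ->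
  exists v, e u v && (cdist Sys v w < cdist Sys u w).
Proof.
move=> esym huw.
suff [v [hev hcl [X [hX hwX hvX huX]]]] : exists v, [/\ e u v,
    forall X, X \in Sys -> w \in X -> u \in X -> v \in X &
    exists X, [/\ X \in Sys, w \in X, v \in X & u \notin X]].
  exists v; rewrite hev /=; apply: proper_card; apply/properP; split.
    apply/subsetP => Y; rewrite !in_setD !mem_cat => /andP[hn /andP[hY hw]].
    rewrite hY hw /= andbT; apply: contra hn => hu.
    by rewrite hY; exact: hcl.
  by exists X; rewrite !in_setD !mem_cat ?hX ?hwX ?hvX ?(negbTE huX).
case: (boolP (w \in sub u)) => hwu.
  move: (hwu); rewrite inE => /andP[hdu /eqP hau].
  have hlt : dep u < dep w.
    rewrite ltn_neqAle hdu andbT; apply/negP => /eqP hh.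
    by move: hau huw; rewrite hh anc_self => ->; rewrite eqxx.
  set v := anc (dep u).+1 w.
  have hdv : dep v = (dep u).+1 by rewrite anc_dep.
  have hvr : v != r by rewrite -dep0 hdv.
  have hpv : par v = u.
    have h1 : anc (dep u) v = u by rewrite anc_anc.
    by rewrite -h1 /anc hdv subSnn.
  exists v; split.
  - by rewrite -{1}hpv; exact: (par_spec hvr).1.
  - move=> X /sysP[[x ->] | [k [i [b ->]]]].
      rewrite !inE => /andP[hxw /eqP hxa] /andP[hxu _].
      apply/andP; split; first by rewrite hdv; lia.
      by rewrite anc_anc ?hxa //; lia.
    rewrite !inE => hw _; case: (ltnP (dep v) k) => // hk.
    rewrite anc_anc //; last by lia.
    by move: hw; rewrite ltnNge (leq_trans hk) //= hdv.
  - exists (sub v); split.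
    + by rewrite inE; apply/orP; left; apply/imsetP; exists v; rewrite ?inE.
    + by rewrite inE hdv hlt /=.
    + by rewrite inE leqnn anc_self eqxx.
    + by rewrite inE hdv ltnn.
have hur : u != r.
  apply: contra hwu => /eqP ->; rewrite inE.
  have -> : dep r = 0 by apply/eqP; rewrite dep0.
  by rewrite anc0 eqxx.
have [hev hdv] := par_spec hur.
have hd : 0 < dep u by rewrite lt0n dep0.
exists (par u); split.
- by rewrite esym.
- move=> X /sysP[[x ->] | [k [i [b ->]]]].
    rewrite !inE => hxw /andP[hxu /eqP hxa].
    have hne : dep x != dep u.
      apply: contra hwu => /eqP hh; move: hxa; rewrite hh anc_self => hux.
      by rewrite hux inE.
    have hle : dep x <= (dep u).-1 by move: hne hxu; lia.
    by rewrite hdv hle anc_par // hxa /=.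
  rewrite !inE => _; case: (ltnP (dep (par u)) k) => // hk.
  rewrite anc_par; last by rewrite -hdv.
  2: done.
  by rewrite ltnNge (leq_trans hk) // hdv leq_pred.
- have [i hi hib] : exists2 i, i < L &
      (dep w < dep u) || (bitn i (lab (anc (dep u) w)) != bitn i (lab u)).
    case: (ltnP (dep w) (dep u)) => h; first by exists 0.
    have hne : anc (dep u) w != u.
      by apply: contra hwu => /eqP hh; rewrite inE h hh eqxx.
    by have [i hi hb] := lab_diff hne; exists i => //; rewrite hb orbT.
  have hk : (dep u).-1 < D by have := dep_le_D u; rewrite /D; lia.
  exists (Cat (dep u) i (bitn i (lab u))); split.
  + rewrite inE; apply/orP; right; apply/imsetP.
    by exists (Ordinal hk, Ordinal hi, bitn i (lab u)); rewrite // /Cf /= prednK.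
  + by rewrite inE.
  + by rewrite inE hdv; apply/orP; left; lia.
  + by rewrite inE ltnn anc_self eqxx.
Qed.

Lemma memdim_bound y : #|Defs.cat Sys y| <= D + D * L * 2.
Proof.
set P1 := [set x | (x != r) && (y \in sub x)].
have hsub : Defs.cat Sys y \subset (sub @: P1) :|: (Cf @: setT).
  apply/subsetP => X; rewrite inE => /andP[]; rewrite inE => /orP[/imsetP[x hx ->] | hC] hy;
    rewrite inE; last by rewrite hC orbT.
  apply/orP; left; apply/imsetP; exists x => //.
  by rewrite inE in hx; rewrite inE hx hy.
apply: leq_trans (subset_leq_card hsub) _.
apply: leq_trans (leq_card_setU _ _).1 _.
apply: leq_add.
  apply: leq_trans (leq_imset_card _ _) _.
  have hP : P1 \subset (fun k : 'I_D => anc k.+1 y) @: setT.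
    apply/subsetP => x; rewrite inE => /andP[hx]; rewrite inE => /andP[hdx /eqP ha].
    have hx0 : 0 < dep x by rewrite lt0n dep0.
    have hk : (dep x).-1 < D by have := dep_le_D y; rewrite /D; lia.
    by apply/imsetP; exists (Ordinal hk) => //=; rewrite prednK.
  apply: leq_trans (subset_leq_card hP) _.
  by apply: leq_trans (leq_imset_card _ _) _; rewrite cardsT card_ord.
apply: leq_trans (leq_imset_card _ _) _.
by rewrite cardsT !card_prod !card_ord card_bool.
Qed.

End Routing.

Theorem theorem2 :
  exists C : nat,
    forall (T : finType) (e : rel T),
      symmetric e -> irreflexive e -> gconnected e ->
      exists S : {set {set T}},
        routing_correct e S /\
        memdim S <= C * (gdiam e + trunc_log 2 #|T|) ^ 2.
Proof.
exists 3 => T e hsym _ hcon.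
case: (pickP (fun _ : T => true)) => [r _ | h0]; last first.
  exists set0; split; first by move=> u; have := h0 u.
  by apply/bigmax_leqP => u; have := h0 u.
exists (Sys e r); split.
  by move=> u w huw; apply: step.
apply/bigmax_leqP => y _.
apply: leq_trans (memdim_bound hcon r y) _.
rewrite /D /L.
move: (gdiam e) (trunc_log 2 #|T|) => d t.
case: d => [|d]; first by rewrite mul0n.
nia.
Qed.
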